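(* Let $u$ be a non-constant twice differentiable function on $\mathbb{R}$ such that $u$, $u'$ and $u''$ are bounded, and assume that $|u'|$ attains its maximal value. Then $$\sup u'' \geq \frac{\|u'\|^2}{2\cdot \mathrm{osc}\,u},$$ where $\|u'\|=\sup_{\mathbb{R}}|u'|$ and $\mathrm{osc}\,u=\sup u-\inf u$. *)

(* Defs.v *)
From Stdlib Require Import Reals.
From Coquelicot Require Import Coquelicot.
Open Scope R_scope.

(* Supremum over R of a real function (as a real number; meaningful when
   f is bounded above, where Lub_Rbar is finite). *)
Definition sup_fun (f : R -> R) : R :=
  real (Lub_Rbar (fun y => exists x, y = f x)).

Definition inf_fun (f : R -> R) : R :=
  real (Glb_Rbar (fun y => exists x, y = f x)).

Definition osc (u : R -> R) : R := sup_fun u - inf_fun u.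

Definition sup_norm (f : R -> R) : R := sup_fun (fun x => Rabs (f x)).

Definition bounded_fun (f : R -> R) : Prop :=
  exists M, forall x, Rabs (f x) <= M.

(* Main.v *)
Require Import Defs.
From Stdlib Require Import Reals Lra Psatz.
From Coquelicot Require Import Coquelicot.
Open Scope R_scope.

Lemma der_cont f x : ex_derive f x -> continuity_pt f x.
Proof. intro H. apply continuity_pt_filterlim. apply (ex_derive_continuous f x H). Qed.

Lemma mvt f df a b : (forall x, is_derive f x (df x)) ->
  exists c, Rmin a b <= c <= Rmax a b /\ f b - f a = df c * (b - a).
Proof.
  intro H. apply MVT_gen. intros; apply H. intros; apply der_cont. eexists; apply H.
Qed.

Lemma concave_max h h1 h2 x0 : (forall x, is_derive h x (h1 x)) ->
  (forall x, is_derive h1 x (h2 x)) -> (forall x, h2 x <= 0) -> h1 x0 = 0 ->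
  forall t, h t <= h x0.
Proof.
  intros H1 H2 Hn H0 t.
  destruct (mvt h h1 t x0 H1) as [c [Hc Ec]].
  destruct (mvt h1 h2 c x0 H2) as [d [_ Ed]].
  rewrite H0 in Ed. specialize (Hn d).
  assert (P : 0 <= (x0 - c) * (x0 - t)).
  { unfold Rmin, Rmax in Hc; destruct (Rle_dec t x0); nra. }
  assert (Q : h1 c = - h2 d * (x0 - c)) by lra.
  rewrite Q in Ec. nra.
Qed.

Lemma der_shift u u1 c1 c2 x0 x : is_derive u x (u1 x) ->
  is_derive (fun t => u t + (c1*t + c2*(t-x0)^2)) x (u1 x + (c1 + 2*c2*(x-x0))).
Proof.
  intro H. apply (is_derive_plus u (fun t => c1*t + c2*(t-x0)^2)). exact H.
  auto_derive. auto. ring.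
Qed.

Lemma sup_ub f M : (forall x, f x <= M) -> forall x, f x <= sup_fun f.
Proof.
  intros HM x. unfold sup_fun. destruct (Lub_Rbar_correct (fun y => exists x, y = f x)) as [Hu Hl].
  assert (A := Hu (f x) (ex_intro _ x eq_refl)).
  assert (B : Rbar_le (Lub_Rbar (fun y => exists x, y = f x)) M).
  { apply Hl. intros y [z ->]. simpl. apply HM. }
  destruct (Lub_Rbar _); simpl in *; try contradiction; lra.
Qed.

Lemma sup_att f x0 : (forall x, f x <= f x0) -> sup_fun f = f x0.
Proof.
  intros HM. unfold sup_fun. destruct (Lub_Rbar_correct (fun y => exists x, y = f x)) as [Hu Hl].
  assert (A := Hu (f x0) (ex_intro _ x0 eq_refl)).
  assert (B : Rbar_le (Lub_Rbar (fun y => exists x, y = f x)) (f x0)).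
  { apply Hl. intros y [z ->]. simpl. apply HM. }
  destruct (Lub_Rbar _); simpl in *; try contradiction; lra.
Qed.

Lemma inf_lb f M : (forall x, M <= f x) -> forall x, inf_fun f <= f x.
Proof.
  intros HM x. unfold inf_fun. destruct (Glb_Rbar_correct (fun y => exists x, y = f x)) as [Hu Hl].
  assert (A := Hu (f x) (ex_intro _ x eq_refl)).
  assert (B : Rbar_le M (Glb_Rbar (fun y => exists x, y = f x))).
  { apply Hl. intros y [z ->]. simpl. apply HM. }
  destruct (Glb_Rbar _); simpl in *; try contradiction; lra.
Qed.

Lemma der_lin u1 u2 c1 c2 x0 x : is_derive u1 x (u2 x) ->
  is_derive (fun t => u1 t + (c1 + c2*(t-x0))) x (u2 x + c2).
Proof.
  intro H. apply (is_derive_plus u1 (fun t => c1 + c2*(t-x0))). exact H.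
  auto_derive. auto. ring.
Qed.

Lemma core u u1 u2 x0 S : (forall x, is_derive u x (u1 x)) ->
  (forall x, is_derive u1 x (u2 x)) -> (forall x, u2 x <= S) -> 0 < S ->
  exists a b, u b - u a >= (u1 x0)^2 / (2*S).
Proof.
  intros H1 H2 HS Sp.
  set (a := Rabs (u1 x0) / S).
  assert (Ea : Rabs (u1 x0) = a * S) by (unfold a; field; lra).
  assert (Eq2 : (u1 x0)^2 / (2*S) = S * a^2 / 2).
  { rewrite <- (pow2_abs (u1 x0)), Ea. field. lra. }
  rewrite Eq2.
  destruct (Rle_dec 0 (u1 x0)) as [Hp|Hn].
  - rewrite Rabs_pos_eq in Ea by lra.
    pose (L := u1 x0).
    assert (K := concave_max (fun t => u t + (-L*t + (-S/2)*(t-x0)^2))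
      (fun t => u1 t + (-L + 2*(-S/2)*(t-x0))) (fun t => u2 t + 2*(-S/2)) x0).
    assert (K' : forall t, u t + (-L*t + (-S/2)*(t-x0)^2) <= u x0 + (-L*x0 + (-S/2)*(x0-x0)^2)).
    { apply K. intro; apply der_shift; auto.
      intro x. apply der_lin; auto. intro x; specialize (HS x); lra. unfold L; lra. }
    specialize (K' (x0 - a)). exists (x0 - a), x0. unfold L in K'. nra.
  - rewrite Rabs_left in Ea by lra.
    pose (L := - u1 x0).
    assert (K := concave_max (fun t => u t + (L*t + (-S/2)*(t-x0)^2))
      (fun t => u1 t + (L + 2*(-S/2)*(t-x0))) (fun t => u2 t + 2*(-S/2)) x0).
    assert (K' : forall t, u t + (L*t + (-S/2)*(t-x0)^2) <= u x0 + (L*x0 + (-S/2)*(x0-x0)^2)).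
    { apply K. intro; apply der_shift; auto.
      intro x. apply der_lin; auto. intro x; specialize (HS x); lra. unfold L; lra. }
    specialize (K' (x0 + a)). exists (x0 + a), x0. unfold L in K'. nra.
Qed.

Theorem proposition2p1 (u : R -> R)
  (Hd1 : forall x, ex_derive u x)
  (Hd2 : forall x, ex_derive (Derive u) x)
  (Hnc : exists x y, u x <> u y)
  (Hbu : bounded_fun u)
  (Hbu1 : bounded_fun (Derive u))
  (Hbu2 : bounded_fun (Derive (Derive u)))
  (Hmax : exists x0, forall x, Rabs (Derive u x) <= Rabs (Derive u x0)) :
  sup_fun (Derive (Derive u)) >= (sup_norm (Derive u)) ^ 2 / (2 * osc u).
Proof.
  assert (H1 : forall x, is_derive u x (Derive u x)) by (intro; apply Derive_correct; auto).
  assert (H2 : forall x, is_derive (Derive u) x (Derive (Derive u) x)) by (intro; apply Derive_correct; auto).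
  destruct Hmax as [x0 Hx0].
  destruct Hbu as [B HB]. destruct Hbu2 as [M2 HM2].
  unfold sup_norm. rewrite (sup_att _ x0 Hx0).
  set (L := Rabs (Derive u x0)).
  set (S := sup_fun (Derive (Derive u))).
  assert (HS : forall x, Derive (Derive u) x <= S).
  { apply (sup_ub _ M2). intro x; specialize (HM2 x); apply Rabs_le_between in HM2; lra. }
  assert (Hosc : forall a b, u b - u a <= osc u).
  { intros a b. unfold osc.
    assert (u b <= sup_fun u).
    { apply (sup_ub _ B). intro x; specialize (HB x); apply Rabs_le_between in HB; lra. }
    assert (inf_fun u <= u a).
    { apply (inf_lb _ (-B)). intro x; specialize (HB x); apply Rabs_le_between in HB; lra. }
    lra. }
  assert (HBab : forall a b, u b - u a <= 2 * B).
  { intros a b. assert (P := HB a). assert (Q := HB b).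
    apply Rabs_le_between in P. apply Rabs_le_between in Q. lra. }
  assert (Lp : 0 < L).
  { destruct (Rle_lt_or_eq_dec 0 L (Rabs_pos _)) as [|E]; auto.
    exfalso. destruct Hnc as [x [y Hxy]]. apply Hxy.
    destruct (mvt u (Derive u) y x H1) as [c [_ Ec]].
    assert (Z : Derive u c = 0).
    { specialize (Hx0 c). fold L in Hx0. rewrite <- E in Hx0.
      apply Rabs_eq_0. apply Rle_antisym; auto. apply Rabs_pos. }
    rewrite Z in Ec. lra. }
  assert (Bp : 0 <= B) by (specialize (HB x0); pose proof (Rabs_pos (u x0)); lra).
  destruct (Rle_dec S 0) as [Sn|Sp].
  - exfalso.
    set (S' := L^2 / (2*(2*B+1))).
    assert (S'p : 0 < S') by (unfold S'; apply Rdiv_lt_0_compat; nra).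
    destruct (core u (Derive u) (Derive (Derive u)) x0 S' H1 H2) as [a [b Hab]]; auto.
    { intro x; specialize (HS x); lra. }
    rewrite <- (pow2_abs (Derive u x0)) in Hab. fold L in Hab.
    assert (E : L ^ 2 / (2 * S') = 2*B+1) by (unfold S'; field; nra).
    rewrite E in Hab. specialize (HBab a b). lra.
  - apply Rnot_le_lt in Sp.
    destruct (core u (Derive u) (Derive (Derive u)) x0 S H1 H2 HS Sp) as [a [b Hab]].
    rewrite <- (pow2_abs (Derive u x0)) in Hab. fold L in Hab.
    specialize (Hosc a b).
    assert (Dp : 0 < L^2/(2*S)) by (apply Rdiv_lt_0_compat; nra).
    set (O := osc u) in *.
    assert (Op : 0 < O) by lra.
    assert (X : L^2 <= 2*S*O).
    { assert (Y : L^2 = (L^2/(2*S)) * (2*S)) by (field; lra). nra. }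
    apply Rle_ge. apply Rle_div_l. lra. lra.
Qed.
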